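(* Let $G_0$ be a finite group with an involutive automorphism $g\mapsto\tilde g$. On $\mathcal H=\mathbb C^{G_0}$ with orthonormal basis $\{|g\rangle\}_{g\in G_0}$ let $D(g)=\sum_{h}|gh\rangle\langle h|$ for $g\in G_0$, and let $D(t)=\sum_g|\tilde g\rangle\langle g|K$ be antiunitary ($K$ = complex conjugation in this basis); set $D(gt)=D(g)D(t)$. Define on $\mathcal H\otimes\mathcal H$ $$U_1=\sum_{g\in G_0}D(g)\otimes|g^{-1}\rangle\langle g^{-1}|,\quad u_2=\sum_{g\in G_0}\tfrac1{\sqrt2}\big(e^{i\pi/4}|g\rangle+e^{-i\pi/4}|\tilde g\rangle\big)\langle g|,\quad u=(u_2\otimes\mathbb{1})U_1 .$$ Then $u$ is unitary and $u\,(D(g)\otimes D(g))\,u^\dagger=\mathbb{1}\otimes D(g)$ for every $g\in G_0\rtimes\mathbb Z_2^{\mathcal T}$ (i.e. for $g\in G_0$ and for $g=g_0t$, $g_0\in G_0$). Consequently, by iterating, $D(g)^{\otimes N}$ is unitarily equivalent (by a unitary independent of $g$) to $\mathbb{1}_{|G_0|^{N-1}}\otimes D(g)$ for all $g$. *)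

(* Defs.v *)
From mathcomp Require Import all_boot all_algebra all_fingroup all_field.
Set Implicit Arguments. Unset Strict Implicit. Unset Printing Implicit Defensive.
Import GRing.Theory Num.Theory.
Local Open Scope ring_scope.

(* Operators on C^I (I a finite basis index) as matrices indexed by I:
   [A x y] is the coefficient <x| A |y>. *)
Definition op (I : finType) := I -> I -> algC.

Definition op1 (I : finType) : op I := fun x y => (x == y)%:R.
Definition opmul (I : finType) (A B : op I) : op I :=
  fun x y => \sum_(z : I) A x z * B z y.
Definition opadj (I : finType) (A : op I) : op I := fun x y => (A y x)^*.
Definition opconj (I : finType) (A : op I) : op I := fun x y => (A x y)^*.
Definition opkron (I J : finType) (A : op I) (B : op J) : op (I * J)%type :=
  fun x y => A x.1 y.1 * B x.2 y.2.
Definition opsum (I : finType) (T : finType) (F : T -> op I) : op I :=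
  fun x y => \sum_(t : T) F t x y.
Definition ketbra (I : finType) (a b : I) : op I :=
  fun x y => ((x == a) && (y == b))%:R.

Definition unitary (I : finType) (A : op I) : Prop :=
  opmul A (opadj A) = @op1 I /\ opmul (opadj A) A = @op1 I.

(* Linear-or-antilinear operators: (A, false) is the linear operator A,
   (A, true) is the antilinear operator A K, K = complex conjugation in the
   computational (product) basis. *)
Definition aop (I : finType) := (op I * bool)%type.
Definition lin (I : finType) (A : op I) : aop I := (A, false).
(* composition: (A K^b)(B K^c) = A conj^b(B) K^(b xor c) *)
Definition acomp (I : finType) (X Y : aop I) : aop I :=
  (opmul X.1 (if X.2 then opconj Y.1 else Y.1), X.2 (+) Y.2).
(* tensor product, with K acting on the whole tensor product in the product
   basis (physics convention; only used when the linear factors are real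
   or both factors have the same antiunitarity) *)
Definition akron (I J : finType) (X : aop I) (Y : aop J) : aop (I * J)%type :=
  (opkron X.1 Y.1, X.2 || Y.2).

Section Rep.
Variable gT : finGroupType.
Variable tl : gT -> gT.

Definition Dmat (g : gT) : op gT := fun a b => (a == g * b)%g%:R.
Definition Dtmat : op gT := fun a b => (a == tl b)%:R.
Definition Dt : aop gT := (Dtmat, true).
(* elements of G0 x| Z2^T written (g0, b) for g0 t^b; D(g0 t) = D(g0) D(t) *)
Definition D (x : gT * bool) : aop gT :=
  if x.2 then acomp (lin (Dmat x.1)) Dt else lin (Dmat x.1).

Definition U1 : op (gT * gT)%type :=
  opsum (fun g : gT => opkron (Dmat g) (ketbra g^-1 g^-1)%g).
Definition expi4 : algC := (1 + 'i) / sqrtC 2.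
Definition u2 : op gT :=
  opsum (fun g : gT => fun a b =>
    (sqrtC 2)^-1 * (expi4 * ketbra g g a b + expi4^* * ketbra (tl g) g a b)).
Definition u : op (gT * gT)%type := opmul (opkron u2 (@op1 gT)) U1.

Definition tpow (N : nat) (X : aop gT) : aop {ffun 'I_N -> gT} :=
  (fun x y : {ffun 'I_N -> gT} => \prod_(i < N) X.1 (x i) (y i), X.2).
Definition id_tens_last (n : nat) (X : aop gT) : aop {ffun 'I_n.+1 -> gT} :=
  (fun x y : {ffun 'I_n.+1 -> gT} => (\prod_(i < n) ((x (widen_ord (leqnSn n) i)) ==
                               (y (widen_ord (leqnSn n) i)))%:R)
              * X.1 (x ord_max) (y ord_max), X.2).
End Rep.

(* Main.v *)
Require Import Defs.
From mathcomp Require Import all_boot all_algebra all_fingroup all_field.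
From mathcomp Require Import ring.
From Stdlib Require Import FunctionalExtensionality.
Import GRing.Theory Num.Theory.
Local Open Scope ring_scope.

Definition pm {I : finType} (f : I -> I) : op I := fun x y => (x == f y)%:R.
Definition optr {I : finType} (A : op I) : op I := fun x y => A y x.
Definition Wb {I : finType} (b : bool) (A : op I) : op I :=
  if b then optr A else opadj A.
Definition tens {N : nat} {T : finType} (A : 'I_N -> op T) : op {ffun 'I_N -> T} :=
  fun x y => \prod_(i < N) A i (x i) (y i).

Lemma opext (I : finType) (A B : op I) : (forall x y, A x y = B x y) -> A = B.
Proof.
move=> h; apply: functional_extensionality => x;
apply: functional_extensionality => y; exact: h.
Qed.

Lemma sum_delta (I : finType) (e : I) (F : I -> algC) :
  \sum_z ((z == e)%:R * F z) = F e.
Proof.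
rewrite (bigD1 e) //= eqxx mul1r big1 ?addr0 // => z /negPf ->; by rewrite mul0r.
Qed.

Lemma sum_delta_r (I : finType) (e : I) (F : I -> algC) :
  \sum_z (F z * (z == e)%:R) = F e.
Proof. rewrite -[RHS](sum_delta _ e); apply: eq_bigr => z _; exact: mulrC. Qed.

Lemma mul_pm_r (I : finType) (A : op I) (f : I -> I) :
  opmul A (pm f) = fun x y => A x (f y).
Proof. apply: opext => x y; rewrite /opmul /pm; exact: sum_delta_r. Qed.

Lemma mul1op (I : finType) (A : op I) : opmul (@op1 I) A = A.
Proof.
apply: opext => x y; rewrite /opmul /op1.
under eq_bigr => z _ do rewrite eq_sym.
exact: sum_delta.
Qed.

Lemma mulop1 (I : finType) (A : op I) : opmul A (@op1 I) = A.
Proof. apply: opext => x y; rewrite /opmul /op1; exact: sum_delta_r. Qed.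

Lemma Wb_op1 (I : finType) b : Wb b (@op1 I) = @op1 I.
Proof.
apply: opext => x y; case: b; rewrite /Wb /optr /opadj /op1 //= ?conjC_nat eq_sym //.
Qed.

Lemma kron_mul (I J : finType) (A C : op I) (B D : op J) :
  opmul (opkron A B) (opkron C D) = opkron (opmul A C) (opmul B D).
Proof.
apply: opext => x y; rewrite /opmul /opkron big_distrlr /= pair_bigA /=.
by apply: eq_bigr => [[z1 z2]] _ /=; rewrite mulrACA.
Qed.

Lemma Wb_kron (I J : finType) b (A : op I) (B : op J) :
  Wb b (opkron A B) = opkron (Wb b A) (Wb b B).
Proof.
apply: opext => x y; case: b => //; by rewrite /Wb /optr /opadj /opkron /= rmorphM.
Qed.

Lemma kron_op1 (I J : finType) : opkron (@op1 I) (@op1 J) = @op1 (I * J)%type.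
Proof.
apply: opext => [[x1 x2] [y1 y2]]; by rewrite /opkron /op1 /= xpair_eqE -natrM mulnb.
Qed.

Lemma kron_pm (I J : finType) (f1 : I -> I) (f2 : J -> J) :
  pm (fun c => (f1 c.1, f2 c.2)) = opkron (pm f1) (pm f2).
Proof.
apply: opext => [[x1 x2] [y1 y2]]; by rewrite /opkron /pm /= xpair_eqE -natrM mulnb.
Qed.

Lemma unitary_kron (I J : finType) (A : op I) (B : op J) :
  unitary A -> unitary B -> unitary (opkron A B).
Proof.
move=> [a1 a2] [b1 b2]; rewrite /unitary.
have hadj : opadj (opkron A B) = opkron (opadj A) (opadj B) by exact (@Wb_kron _ _ false A B).
by rewrite hadj !kron_mul a1 a2 b1 b2 kron_op1.
Qed.

Lemma prod_eq_ffun N (T : finType) (x y : {ffun 'I_N -> T}) :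
  \prod_(i < N) ((x i == y i)%:R : algC) = (x == y)%:R.
Proof.
have [->|nxy] := eqVneq x y.
  by rewrite big1 // => i _; rewrite eqxx.
case/boolP: [forall i, x i == y i] => [/forallP h | /forallPn [i hi]].
  by exfalso; move/eqP: nxy; apply; apply/ffunP => i; apply/eqP.
by rewrite (bigD1 i) //= (negPf hi) mul0r.
Qed.

Lemma tens_mul N (T : finType) (A B : 'I_N -> op T) :
  opmul (tens A) (tens B) = tens (fun i => opmul (A i) (B i)).
Proof.
apply: opext => x y; rewrite /opmul /tens bigA_distr_bigA /=.
by apply: eq_bigr => z _; rewrite -big_split.
Qed.

Lemma Wb_tens N (T : finType) b (A : 'I_N -> op T) :
  Wb b (tens A) = tens (fun i => Wb b (A i)).
Proof.
apply: opext => x y; case: b => //; by rewrite /Wb /optr /opadj /tens /= rmorph_prod.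
Qed.

Lemma tens_op1 N (T : finType) : tens (fun _ : 'I_N => @op1 T) = @op1 _.
Proof. apply: opext => x y; rewrite /tens /op1; exact: prod_eq_ffun. Qed.

Lemma tens_pm N (T : finType) (r : 'I_N -> T -> T) :
  pm (fun c : {ffun 'I_N -> T} => [ffun i => r i (c i)]) = tens (fun i => pm (r i)).
Proof.
apply: opext => x y; rewrite /tens /pm -prod_eq_ffun.
by apply: eq_bigr => i _; rewrite ffunE.
Qed.

Lemma unitary_tens N (T : finType) (A : 'I_N -> op T) :
  (forall i, unitary (A i)) -> unitary (tens A).
Proof.
move=> h; rewrite /unitary.
have hadj : opadj (tens A) = tens (fun i => opadj (A i)) by exact (@Wb_tens _ _ false A).
rewrite hadj !tens_mul.
have -> : (fun i => opmul (A i) (opadj (A i))) = (fun _ => @op1 T).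
  by apply: functional_extensionality => i; case: (h i).
have -> : (fun i => opmul (opadj (A i)) (A i)) = (fun _ => @op1 T).
  by apply: functional_extensionality => i; case: (h i).
by rewrite tens_op1.
Qed.

Lemma GL (I : finType) (V : op I) (psi psii f rho : I -> I) (b : bool) :
  cancel psi psii -> cancel psii psi -> (forall z, psi (f (psii z)) = rho z) ->
  opmul (opmul (opmul V (pm psi)) (pm f))
    (if b then opconj (opadj (opmul V (pm psi))) else opadj (opmul V (pm psi)))
  = opmul (opmul V (pm rho)) (Wb b V).
Proof.
move=> K1 K2 hr; rewrite !mul_pm_r; apply: opext => x y; rewrite /opmul /Wb.
rewrite [LHS](reindex_inj (can_inj K2)) /=.
apply: eq_bigr => z _; rewrite hr; case: b => /=; rewrite /opconj /opadj /optr ?conjCK ?K2 //.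
Qed.

Lemma unitary_pm (I : finType) (V : op I) (psi psii : I -> I) :
  unitary V -> cancel psi psii -> cancel psii psi -> unitary (opmul V (pm psi)).
Proof.
move=> [h1 h2] K1 K2; rewrite /unitary mul_pm_r; split.
  apply: opext => x y; rewrite -h1 /opmul /opadj [RHS](reindex_inj (can_inj K1)) //.
apply: opext => x y; have := congr1 (fun M => M (psi x) (psi y)) h2.
by rewrite /opmul /opadj /op1 /= (inj_eq (can_inj K1)) => <-.
Qed.

Definition kk : algC := (sqrtC 2)^-1 * expi4.

Lemma kk_val : kk = (1 + 'i) / 2.
Proof. by rewrite /kk /expi4 mulrC -mulrA -invfM -expr2 sqrtCK. Qed.

Lemma conj_kk : kk^* = (1 - 'i) / 2.
Proof. by rewrite kk_val rmorphM rmorphD rmorph1 /= conjCi fmorphV /= conjC_nat. Qed.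

Lemma kk_rel1 : kk * kk^* + kk^* * kk = 1.
Proof.
rewrite conj_kk kk_val; have hx : 'i * 'i = -1 :> algC by rewrite -expr2 sqrCi.
move: ('i : algC) hx => x hx.
have -> : ((1+x)/2)*((1-x)/2) + ((1-x)/2)*((1+x)/2) = 1 - (x*x + 1)/2 by field.
by rewrite hx addNr mul0r subr0.
Qed.

Lemma kk_rel2 : kk * kk + kk^* * kk^* = 0.
Proof.
rewrite conj_kk kk_val; have hx : 'i * 'i = -1 :> algC by rewrite -expr2 sqrCi.
move: ('i : algC) hx => x hx.
have -> : ((1+x)/2)*((1+x)/2) + ((1-x)/2)*((1-x)/2) = (x*x + 1)/2 by field.
by rewrite hx addNr mul0r.
Qed.

Lemma conj_kk' : kk^* = (sqrtC 2)^-1 * expi4^*.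
Proof. by rewrite /kk rmorphM fmorphV /= geC0_conj // sqrtC_ge0 ler0n. Qed.

Lemma u2E (gT : finGroupType) (tl : gT -> gT) a b :
  u2 tl a b = kk * (a == b)%:R + kk^* * (a == tl b)%:R.
Proof.
rewrite /u2 /opsum (bigD1 b) //= big1 ?addr0.
  by rewrite /ketbra eqxx !andbT conj_kk' /kk; ring.
move=> g hg; rewrite /ketbra [b == g]eq_sym (negPf hg) !andbF.
by rewrite ?mulr0n ?mulr0 ?addr0 ?mulr0.
Qed.

Lemma eq_tl {gT : finGroupType} {tl : gT -> gT} (tl_invol : forall x, tl (tl x) = x) (a b : gT) :
  (a == tl b) = (b == tl a).
Proof. by apply/eqP/eqP => ->; rewrite tl_invol. Qed.

Lemma u2_tl {gT : finGroupType} {tl : gT -> gT} (tl_invol : forall x, tl (tl x) = x) a z :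
  u2 tl a (tl z) = (u2 tl a z)^*.
Proof.
rewrite !u2E; move: kk => k; rewrite rmorphD !rmorphM /= !conjC_nat conjCK tl_invol addrC.
by rewrite (eq_tl tl_invol a z).
Qed.

Lemma u2_unit {gT : finGroupType} {tl : gT -> gT} (tl_invol : forall x, tl (tl x) = x) a c :
  \sum_z u2 tl a z * (u2 tl c z)^* = (a == c)%:R.
Proof.
have h : forall z, u2 tl a z * (u2 tl c z)^* =
   kk * ((z == a)%:R * (u2 tl c z)^*) + kk^* * ((z == tl a)%:R * (u2 tl c z)^*).
  by move=> z; rewrite [u2 tl a z]u2E eq_sym (eq_tl tl_invol a z); ring.
rewrite (eq_bigr _ (fun z _ => h z)) big_split /= -!mulr_sumr !sum_delta.
rewrite (u2_tl tl_invol) conjCK u2E.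
move: kk kk_rel1 kk_rel2 => k r1 r2.
rewrite rmorphD !rmorphM /= !conjC_nat conjCK.
set p := ((c == a)%:R : algC); set q := ((c == tl a)%:R : algC).
transitivity ((k * k^* + k^* * k) * p + (k * k + k^* * k^*) * q); first by ring.
by rewrite r1 r2 mul1r mul0r addr0 /p eq_sym.
Qed.

Lemma u2_sym {gT : finGroupType} {tl : gT -> gT} (tl_invol : forall x, tl (tl x) = x) a c :
  u2 tl a c = u2 tl c a.
Proof. by rewrite !u2E eq_sym (eq_tl tl_invol a c). Qed.

Definition tau {gT : finGroupType} (tl : gT -> gT) (b : bool) (y : gT) :=
  if b then tl y else y.

Lemma KU {gT : finGroupType} {tl : gT -> gT} (tl_invol : forall x, tl (tl x) = x) b a c :
  \sum_z u2 tl a (tau tl b z) * (if b then u2 tl c z else (u2 tl c z)^*) = (a == c)%:R.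
Proof.
case: b; last exact: u2_unit.
rewrite -[RHS]conjC_nat -(u2_unit tl_invol a c) rmorph_sum /=.
by apply: eq_bigr => z _; rewrite rmorphM /= conjCK (u2_tl tl_invol).
Qed.

Lemma u2_op {gT : finGroupType} {tl : gT -> gT} (tl_invol : forall x, tl (tl x) = x) b :
  opmul (opmul (u2 tl) (pm (tau tl b))) (Wb b (u2 tl)) = @op1 gT.
Proof.
rewrite mul_pm_r; apply: opext => a c; rewrite /opmul /op1 -(KU tl_invol b a c).
by apply: eq_bigr => z _; case: b.
Qed.

Lemma u2_unitary {gT : finGroupType} {tl : gT -> gT} (tl_invol : forall x, tl (tl x) = x) :
  unitary (u2 tl).
Proof.
split; apply: opext => a c; rewrite /opmul /opadj /op1.
  exact: u2_unit.
rewrite -[RHS]conjC_nat -(u2_unit tl_invol a c) rmorph_sum /=.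
by apply: eq_bigr => z _; rewrite rmorphM /= conjCK !(u2_sym tl_invol z).
Qed.

Lemma op1_unitary (I : finType) : unitary (@op1 I).
Proof.
have h : opadj (@op1 I) = @op1 I by exact (@Wb_op1 I false).
by split; rewrite h mul1op.
Qed.

Definition sig {gT : finGroupType} (tl : gT -> gT) (b : bool) (g0 : gT) (y : gT) :=
  (g0 * tau tl b y)%g.

Lemma tauM {gT : finGroupType} {tl : gT -> gT}
  (tl_morph : forall x y : gT, tl (x * y)%g = (tl x * tl y)%g) b x y :
  tau tl b (x * y)%g = (tau tl b x * tau tl b y)%g.
Proof. by case: b; rewrite /tau. Qed.

Lemma D_eq {gT : finGroupType} (tl : gT -> gT) (x : gT * bool) :
  D tl x = (pm (sig tl x.2 x.1), x.2).
Proof.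
case: x => g [] //=; rewrite /D /=.
rewrite /acomp /lin /Dt /=. change (Dtmat tl) with (pm tl); by rewrite mul_pm_r.
Qed.

Definition phi {gT : finGroupType} (b : gT * gT) : gT * gT := ((b.2^-1 * b.1)%g, b.2).
Definition phii {gT : finGroupType} (c : gT * gT) : gT * gT := ((c.2 * c.1)%g, c.2).

Lemma phiK {gT : finGroupType} : cancel (@phi gT) phii.
Proof. by case=> c1 c2; rewrite /phi /phii /= mulKVg. Qed.
Lemma phiiK {gT : finGroupType} : cancel (@phii gT) phi.
Proof. by case=> c1 c2; rewrite /phi /phii /= mulKg. Qed.

Lemma U1_pm (gT : finGroupType) : @U1 gT = pm phi.
Proof.
apply: opext => [[a1 a2] [b1 b2]].
rewrite /U1 /opsum /opkron /Dmat /ketbra /pm /phi /= xpair_eqE.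
rewrite (bigD1 b2^-1%g) //= big1 ?addr0.
  by rewrite invgK eqxx !andbT -natrM mulnb.
move=> g hg.
have -> : (b2 == g^-1)%g = (g == b2^-1)%g by apply/eqP/eqP => ->; rewrite invgK.
by rewrite (negPf hg) andbF mulr0.
Qed.

Lemma u_eq {gT : finGroupType} (tl : gT -> gT) :
  u tl = opmul (opkron (u2 tl) (@op1 gT)) (pm phi).
Proof. by rewrite /u U1_pm. Qed.

Lemma P2 {gT : finGroupType} {tl : gT -> gT}
  (tl_morph : forall x y : gT, tl (x * y)%g = (tl x * tl y)%g)
  (tl_invol : forall x : gT, tl (tl x) = x) (g0 : gT) (b : bool) :
  opmul (opmul (u tl) (opkron (pm (sig tl b g0)) (pm (sig tl b g0))))
     (if b then opconj (opadj (u tl)) else opadj (u tl))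
  = opkron (@op1 gT) (pm (sig tl b g0)).
Proof.
rewrite u_eq -kron_pm (@GL _ _ _ _ _ (fun c => (tau tl b c.1, sig tl b g0 c.2)) b phiK phiiK).
  rewrite kron_pm Wb_kron !kron_mul (u2_op tl_invol) Wb_op1 mul1op mulop1 //.
by case=> c1 c2; rewrite /phi /phii /sig /= (tauM tl_morph) (mulgA g0) mulKg.
Qed.

Definition psiN {gT : finGroupType} (n : nat) (c : {ffun 'I_n.+1 -> gT}) : {ffun 'I_n.+1 -> gT} :=
  [ffun i => if i == ord_max then c ord_max else ((c ord_max)^-1 * c i)%g].
Definition psiNi {gT : finGroupType} (n : nat) (c : {ffun 'I_n.+1 -> gT}) : {ffun 'I_n.+1 -> gT} :=
  [ffun i => if i == ord_max then c ord_max else (c ord_max * c i)%g].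

Lemma psiNK {gT : finGroupType} n : cancel (@psiN gT n) (psiNi n).
Proof.
move=> c; apply/ffunP => i; case: (eqVneq i ord_max) => [-> | hi];
  rewrite !ffunE ?eqxx ?(negPf hi) //= mulKVg //.
Qed.
Lemma psiNiK {gT : finGroupType} n : cancel (@psiNi gT n) (psiN n).
Proof.
move=> c; apply/ffunP => i; case: (eqVneq i ord_max) => [-> | hi];
  rewrite !ffunE ?eqxx ?(negPf hi) //= mulKg //.
Qed.

Definition WN {gT : finGroupType} (tl : gT -> gT) (n : nat) : op {ffun 'I_n.+1 -> gT} :=
  opmul (tens (fun i : 'I_n.+1 => if i == ord_max then @op1 gT else u2 tl)) (pm (psiN n)).

Lemma WN_unitary {gT : finGroupType} {tl : gT -> gT}
  (tl_invol : forall x : gT, tl (tl x) = x) n : unitary (WN tl n).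
Proof.
apply: unitary_pm (@psiNK gT n) (@psiNiK gT n).
apply: unitary_tens => i; case: (i == ord_max); [exact: op1_unitary | exact: u2_unitary].
Qed.

Lemma P3 {gT : finGroupType} {tl : gT -> gT}
  (tl_morph : forall x y : gT, tl (x * y)%g = (tl x * tl y)%g)
  (tl_invol : forall x : gT, tl (tl x) = x) (n : nat) (g0 : gT) (b : bool) :
  opmul (opmul (WN tl n) (tens (fun _ : 'I_n.+1 => pm (sig tl b g0))))
     (if b then opconj (opadj (WN tl n)) else opadj (WN tl n))
  = tens (fun i : 'I_n.+1 => if i == ord_max then pm (sig tl b g0) else @op1 gT).
Proof.
have E : tens (fun _ : 'I_n.+1 => pm (sig tl b g0)) =
   pm (fun c : {ffun 'I_n.+1 -> gT} => [ffun i => sig tl b g0 (c i)]).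
  exact (esym (@tens_pm _ _ (fun _ => sig tl b g0))).
rewrite E /WN (@GL _ _ _ _ _ (fun c : {ffun 'I_n.+1 -> gT} =>
   [ffun i => (if i == ord_max then sig tl b g0 else tau tl b) (c i)]) b
   (@psiNK gT n) (@psiNiK gT n)).
  rewrite (@tens_pm _ _ (fun i => if i == ord_max then sig tl b g0 else tau tl b)) Wb_tens !tens_mul; congr tens.
  apply: functional_extensionality => i; case: (i == ord_max).
    by rewrite mul1op Wb_op1 mulop1.
  exact: u2_op.
move=> c; apply/ffunP => i; case: (eqVneq i ord_max) => [-> | hi];
  rewrite !ffunE ?eqxx ?(negPf hi) //=.
by rewrite /sig (tauM tl_morph) (mulgA g0) mulKg.
Qed.

Lemma idtl_eq {gT : finGroupType} n (X : op gT) b :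
  id_tens_last n (X, b) = (tens (fun i : 'I_n.+1 => if i == ord_max then X else @op1 gT), b).
Proof.
congr (_, _); apply: opext => x y; rewrite /tens big_ord_recr /= eqxx; congr (_ * _).
apply: eq_bigr => i _.
rewrite (_ : (widen_ord (leqnSn n) i == ord_max) = false) //.
by rewrite -val_eqE /= (ltn_eqF (ltn_ord i)).
Qed.

Theorem mainTheorem7 (gT : finGroupType) (tl : gT -> gT)
  (tl_morph : forall x y : gT, tl (x * y)%g = (tl x * tl y)%g)
  (tl_invol : forall x : gT, tl (tl x) = x) :
  unitary (u tl)
  /\ (forall x : gT * bool,
        acomp (acomp (lin (u tl)) (akron (D tl x) (D tl x))) (lin (opadj (u tl)))
        = akron (lin (@op1 gT)) (D tl x))
  /\ (forall n : nat, exists W : op {ffun 'I_n.+1 -> gT},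
        unitary W /\
        forall x : gT * bool,
          acomp (acomp (lin W) (tpow n.+1 (D tl x))) (lin (opadj W))
          = id_tens_last n (D tl x)).
Proof.
split.
  rewrite u_eq; apply: unitary_pm phiK phiiK.
  exact: unitary_kron (u2_unitary tl_invol) (op1_unitary _).
split.
  move=> [g0 b]; rewrite D_eq /acomp /akron /lin /= orbb addbF.
  congr (_, _); exact (P2 tl_morph tl_invol g0 b).
move=> n; exists (WN tl n); split; first exact: WN_unitary.
move=> [g0 b]; rewrite D_eq idtl_eq /acomp /lin /tpow /= addbF.
congr (_, _); exact (P3 tl_morph tl_invol n g0 b).
Qed.
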